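(* The restricted wave cone $\Lambda'$ is dense in the wave cone $\Lambda$.
   Context: Let $n\ge2$, $\mathcal S_0^{n\times n}$ the trace-free symmetric $n\times n$ matrices, $Z:=\mathbb{R}\times\mathbb{R}^n\times\mathbb{R}^n\times\mathcal S_0^{n\times n}\times\mathbb{R}$ with elements $\bar z=(\bar\rho,\bar v,\bar m,\bar\sigma,\bar p)$. Define the $(n+2)\times(n+1)$ matrix $M_\Lambda(\bar z):=\begin{pmatrix}\bar\sigma+\bar p\,\mathrm{Id}&\bar v\\ \bar v^T&0\\ \bar m^T&\bar\rho\end{pmatrix}$, the wave cone $\Lambda:=\{\bar z\in Z:\ker M_\Lambda(\bar z)\neq\{0\},\ (\bar\rho,\bar v)\neq0\}$, and $\Lambda':=\{\bar z\in\Lambda:\ker M_\Lambda(\bar z)\cap(\mathbb{R}^n\times(\mathbb{R}\setminus\{0\}))\neq\emptyset\}$. *)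

(* Defs.v *)
From HB Require Import structures.
From mathcomp Require Import all_boot all_order all_algebra.
Set Implicit Arguments. Unset Strict Implicit. Unset Printing Implicit Defensive.
Import Order.TTheory GRing.Theory Num.Theory.
Local Open Scope ring_scope.

(* Membership of sigma in the trace-free symmetric matrices S_0 is the
   predicate [in_Z]. *)
Record Zel (R : realFieldType) (n : nat) := MkZ {
  zrho : R; zv : 'cV[R]_n; zm : 'cV[R]_n; zsigma : 'M[R]_n; zp : R }.

Definition in_Z (R : realFieldType) (n : nat) (z : Zel R n) : Prop :=
  (zsigma z)^T = zsigma z /\ \tr (zsigma z) = 0.

Definition MLambda (R : realFieldType) (n : nat) (z : Zel R n)
  : 'M[R]_(n + 1 + 1, n + 1) :=
  col_mx (col_mx (row_mx (zsigma z + (zp z)%:M) (zv z))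
                 (row_mx (zv z)^T (0 : 'M[R]_1)))
         (row_mx (zm z)^T ((zrho z)%:M : 'M[R]_1)).

Definition Lambda (R : realFieldType) (n : nat) (z : Zel R n) : Prop :=
  in_Z z /\
  (exists x : 'cV[R]_(n + 1), x != 0 /\ MLambda z *m x = 0) /\
  (zrho z != 0 \/ zv z != 0).

Definition Lambda' (R : realFieldType) (n : nat) (z : Zel R n) : Prop :=
  Lambda z /\
  (exists (y : 'cV[R]_n) (t : R), t != 0 /\ MLambda z *m col_mx y t%:M = 0).

(* Closeness in Z (max-norm over all coordinates; Z is finite-dimensional,
   so this induces the standard topology). *)
Definition Zclose (R : realFieldType) (n : nat) (z z' : Zel R n) (e : R) : Prop :=
  [/\ `|zrho z - zrho z'| < e,
      (forall i, `|zv z i 0 - zv z' i 0| < e),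
      (forall i, `|zm z i 0 - zm z' i 0| < e),
      (forall i j, `|zsigma z i j - zsigma z' i j| < e)
    & `|zp z - zp z'| < e].

(* Main.v *)
Require Import Defs.
From HB Require Import structures.
From mathcomp Require Import all_boot all_order all_algebra.
From mathcomp Require Import reals.
From mathcomp Require Import ring lra.
Import Order.TTheory GRing.Theory Num.Theory.
Local Open Scope ring_scope.

Lemma le_sum_nn (R : realFieldType) (n : nat) (F : 'I_n -> R) (i : 'I_n) :
  (forall j, 0 <= F j) -> F i <= \sum_j F j.
Proof.
move=> H; rewrite (bigD1 i) //= lerDl; exact: sumr_ge0.
Qed.

Lemma MLambda_eq0 (R : realFieldType) (n : nat) (z : Zel R n) (y : 'cV[R]_n) (s : 'M[R]_1) :
  (MLambda z *m col_mx y s == 0) =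
  [&& (zsigma z + (zp z)%:M) *m y + zv z *m s == 0,
      (zv z)^T *m y == 0 &
      (zm z)^T *m y + (zrho z)%:M *m s == 0].
Proof.
rewrite /MLambda !mul_col_mx !mul_row_col mul0mx addr0 !col_mx_eq0 andbA //.
Qed.

Theorem lemma3p1 (R : realType) (n : nat) (hn : (2 <= n)%N) (z : Zel R n) :
  Lambda z -> forall e : R, 0 < e -> exists z' : Zel R n, Lambda' z' /\ Zclose z z' e.
Proof.
case=> [[hsT htr] [[x [xn0 hx]] hrv]] e he.
rewrite -[x](@vsubmxK _ n 1) in xn0 hx.
move: xn0 hx; set y := usubmx x; set s := dsubmx x => xn0 /eqP.
rewrite MLambda_eq0 => /and3P[/eqP h1 /eqP h2 /eqP h3].
have [s0|sn0] := eqVneq s 0; last first.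
  exists z; split; last first.
    by split=> *; rewrite subrr normr0.
  split.
    split; first by [].
    split; last by [].
    by exists (col_mx y s); split => //; apply/eqP; rewrite MLambda_eq0 h1 h2 h3 !eqxx.
  exists y, (s 0 0); split.
    apply/eqP => h; move/eqP: sn0; apply; rewrite [s]mx11_scalar h; exact: raddf0.
  by rewrite -mx11_scalar; apply/eqP; rewrite MLambda_eq0 h1 h2 h3 !eqxx.
have yn0 : y != 0.
  by apply: contra xn0 => /eqP y0; rewrite y0 s0 col_mx0.
move: h1 h2 h3; rewrite s0 !mulmx0 !addr0 => h1 h2 h3.
clearbody y.
set v := zv z; set rho := zrho z.
pose c := \sum_i y i 0 ^+ 2.
have yty : y^T *m y = c%:M.
  rewrite [LHS]mx11_scalar !mxE; congr (_%:M); apply: eq_bigr => i _.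
  by rewrite mxE expr2.
have cpos : 0 < c.
  rewrite lt0r sumr_ge0 ?andbT; last by move=> i _; exact: sqr_ge0.
  apply: contra yn0 => /eqP hc; apply/eqP/matrixP => i j.
  rewrite (ord1 j) [RHS]mxE; apply/eqP; rewrite -(sqrf_eq0 (y i 0)); apply/eqP.
  by apply: (psumr_eq0P _ hc) => // k _; exact: sqr_ge0.
pose B := 1 + `|rho| + \sum_i (`|v i 0| + `|y i 0|).
have hB0 : 0 <= \sum_i (`|v i 0| + `|y i 0|).
  by apply: sumr_ge0 => i _; rewrite addr_ge0.
have Bge1 : 1 <= B by rewrite /B -addrA lerDl addr_ge0.
have Bpos : 0 < B by apply: lt_le_trans Bge1.
have Brho : `|rho| <= B by rewrite /B -addrA addrCA lerDl addr_ge0 // ler01.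
have Bv : forall i, `|v i 0| <= B.
  move=> i; apply: le_trans (_ : `|v i 0| + `|y i 0| <= B).
    by rewrite lerDl.
  apply: le_trans (_ : \sum_i (`|v i 0| + `|y i 0|) <= B).
    by apply: (@le_sum_nn _ _ (fun i => `|v i 0| + `|y i 0|)) => j; rewrite addr_ge0.
  by rewrite /B lerDr addr_ge0.
have By : forall i, `|y i 0| <= B.
  move=> i; apply: le_trans (_ : `|v i 0| + `|y i 0| <= B).
    by rewrite lerDr.
  apply: le_trans (_ : \sum_i (`|v i 0| + `|y i 0|) <= B).
    by apply: (@le_sum_nn _ _ (fun i => `|v i 0| + `|y i 0|)) => j; rewrite addr_ge0.
  by rewrite /B lerDr addr_ge0.
pose d := e / (4 * (B * B)).
have dpos : 0 < d by rewrite divr_gt0 // mulr_gt0 // mulr_gt0.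
have dB : d * (B * B) = e / 4.
  rewrite /d; field.
  by rewrite gt_eqF.
clearbody d.
pose E := v *m y^T + y *m v^T.
exists (MkZ rho v (zm z - (d * rho) *: y) (zsigma z - d *: E) (zp z)).
have ytv : y^T *m v = 0 by rewrite -[y^T *m v]trmxK trmx_mul trmxK h2 trmx0.
have K : MLambda (MkZ rho v (zm z - (d * rho) *: y) (zsigma z - d *: E) (zp z))
          *m col_mx y (d * c)%:M = 0.
  apply/eqP; rewrite MLambda_eq0 /= h2 eqxx /=; apply/andP; split.
    rewrite addrAC mulmxBl h1 sub0r -scalemxAl /E mulmxDl -!mulmxA yty h2 mulmx0 addr0.
    by rewrite !mul_mx_scalar scalerA addNr.
  rewrite linearB /= linearZ /= mulmxBl h3 sub0r -scalemxAl yty -scalar_mxM.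
  by rewrite scale_scalar_mx [rho * _]mulrCA mulrA addNr.
have dc0 : d * c != 0 by rewrite mulf_neq0 // gt_eqF.
split.
  split.
    split.
      rewrite /in_Z /=; split.
        rewrite linearB /= linearZ /= hsT /E linearD /= !trmx_mul !trmxK.
        by rewrite [y *m _ + _]addrC.
      rewrite linearB /= linearZ /= htr /E mxtraceD mxtrace_mulC.
      rewrite [\tr (y *m _)]mxtrace_mulC ytv h2 mxtrace0.
      by rewrite addr0 mulr0 subr0.
    split; last by [].
    exists (col_mx y (d * c)%:M); split => //.
    apply: contra yn0 => /eqP hc0; apply/eqP; have := hc0; by rewrite -col_mx0 => /eq_col_mx[-> _].
  by exists y, (d * c); split.
split => /=.
- by rewrite subrr normr0.
- by move=> i; rewrite subrr normr0.
- move=> i; rewrite !mxE opprB addrCA subrr addr0 !normrM gtr0_norm //.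
  have H : d * `|rho| * `|y i 0| <= d * (B * B).
    by rewrite -mulrA ler_pM2l // ler_pM.
  rewrite dB in H.
  lra.
- move=> i j; rewrite !mxE !big_ord1 !mxE opprB addrCA subrr addr0 normrM gtr0_norm //.
  have H0 : `|v i 0 * y j 0 + y i 0 * v j 0| <= B * B + B * B.
    apply: le_trans (ler_normD _ _) _; rewrite !normrM.
    by apply: lerD; apply: ler_pM.
  have H : d * `|v i 0 * y j 0 + y i 0 * v j 0| <= d * (B * B + B * B).
    by rewrite ler_pM2l.
  rewrite mulrDr dB in H; lra.
- by rewrite subrr normr0.
Qed.
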